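(* Fix any total budget $\mathrm{TB}\in\mathbb N_0$ and let $k\in\mathbb N$. Then the disjunctive sum $1/2^k+\overline{1/2^k}=0$.
   Context: Game forms are defined recursively: $G=\{G^{\mathcal L}\mid G^{\mathcal R}\}$ with finite sets of Left and Right options, and finite birthday. $0=\{\varnothing\mid\varnothing\}$, $1=\{0\mid\varnothing\}$. Dyadic game forms: $1/2^0=1$ and for $k\in\mathbb N$, $1/2^k=\{0\mid 1/2^{k-1}\}$. The conjugate is $\bar G=\{\overline{G^{\mathcal R}}\mid\overline{G^{\mathcal L}}\}$. The budget set for total budget $\mathrm{TB}$ is $\mathcal B=\{0,\dots,\mathrm{TB},\hat 0,\dots,\widehat{\mathrm{TB}}\}$: state $p$ (resp. $\hat p$) means Left holds $p$ dollars and Right holds $\mathrm{TB}-p$, and Right (resp. Left) holds the tie-breaking marker. Play of $(G,\tilde p)$: at every position (terminal ones included) both players bid simultaneously, Left $\ell\in\{0,\dots,p\}$, Right $r\in\{0,\dots,\mathrm{TB}-p\}$. If Left holds the marker (state $\hat p$): if $\ell>r$ Left moves to $(G^L,\widehat{p-\ell})$, or, including the marker (allowed when $\ell\ge r$), to $(G^L,p-\ell)$; if $\ell=r$ Left wins, the marker passes to Right, play continues at $(G^L,p-\ell)$; if $\ell<r$ Right moves to $(G^R,\widehat{p+r})$. Symmetrically when Right holds the marker (state $p$): if $r>\ell$ Right moves to $(G^R,p+r)$ or, including the marker, to $(G^R,\widehat{p+r})$; if $r=\ell$ Right wins, the marker passes to Left, play continues at $(G^R,\widehat{p+r})$; if $r<\ell$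 Left moves to $(G^L,p-\ell)$. A player who wins a bid but has no option loses. $o(G,\tilde p)\in\{\mathrm L,\mathrm R\}$ is the winner under optimal play; $\mathrm L>\mathrm R$. Disjunctive sum $G+H=\{G^{\mathcal L}+H,G+H^{\mathcal L}\mid G^{\mathcal R}+H,G+H^{\mathcal R}\}$. $G\ge H$ means $o(G+X,\tilde p)\ge o(H+X,\tilde p)$ for all game forms $X$ and all $\tilde p\in\mathcal B$; $G=H$ means $G\ge H$ and $H\ge G$. *)

(* Defs.v *)
From mathcomp Require Import all_boot.
Set Implicit Arguments. Unset Strict Implicit. Unset Printing Implicit Defensive.

Inductive game : Type := Game : seq game -> seq game -> game.

Definition lopts (G : game) : seq game := let: Game l _ := G in l.
Definition ropts (G : game) : seq game := let: Game _ r := G in r.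

Definition zero : game := Game [::] [::].
Definition game_one : game := Game [:: zero] [::].

(* dyad k = 1/2^k :  1/2^0 = 1,  1/2^(k+1) = { 0 | 1/2^k } *)
Fixpoint dyad (k : nat) : game :=
  match k with
  | 0 => game_one
  | k'.+1 => Game [:: zero] [:: dyad k']
  end.

Fixpoint conj (G : game) : game :=
  match G with Game l r => Game (map conj r) (map conj l) end.

Fixpoint gadd (G H : game) {struct G} : game :=
  match G with
  | Game gl gr =>
    (fix addH (H : game) : game :=
       match H with
       | Game hl hr =>
         Game (map (fun x => gadd x H) gl ++ map addH hl)
              (map (fun x => gadd x H) gr ++ map addH hr)
       end) H
  end.

(* A budget state: [bp] = Left's dollars; [bhat = true] means state \hat p
   (Left holds the tie-breaking marker), [bhat = false] means state p
   (Right holds the marker). *)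
Record bstate := BState { bp : nat; bhat : bool }.

(* A player who wins
   a bid but has no option loses. *)
Fixpoint lwins (TB : nat) (G : game) (s : bstate) {struct G} : bool :=
  let p := bp s in
  let lmove (nexts : seq bstate) :=
      has (fun GL => has (fun s' => lwins TB GL s') nexts) (lopts G) in
  let rmove (nexts : seq bstate) :=
      all (fun GR => all (fun s' => lwins TB GR s') nexts) (ropts G) in
  has (fun l =>
    all (fun r =>
      if bhat s then
        if r < l then lmove [:: BState (p - l) true; BState (p - l) false]
        else if l == r then lmove [:: BState (p - l) false]
        else rmove [:: BState (p + r) true]
      else
        if l < r then rmove [:: BState (p + r) false; BState (p + r) true]
        else if l == r then rmove [:: BState (p + r) true]
        else lmove [:: BState (p - l) false])
      (iota 0 (TB - p).+1))
    (iota 0 p.+1).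

Inductive outcome := OL | OR.
Definition outcome_le (a b : outcome) : bool :=
  match a, b with OL, OR => false | _, _ => true end.

Definition o (TB : nat) (G : game) (s : bstate) : outcome :=
  if lwins TB G s then OL else OR.

Definition game_ge (TB : nat) (G H : game) : Prop :=
  forall (X : game) (p : nat) (hat : bool), p <= TB ->
    outcome_le (o TB (gadd H X) (BState p hat)) (o TB (gadd G X) (BState p hat)).

Definition game_eq (TB : nat) (G H : game) : Prop :=
  game_ge TB G H /\ game_ge TB H G.

(* Main.v *)
Require Import Defs.
From mathcomp Require Import all_boot.
From mathcomp Require Import zify.
From Stdlib Require Import Lia.
Set Implicit Arguments. Unset Strict Implicit. Unset Printing Implicit Defensive.


Fixpoint game_ind' (P : game -> Prop)
  (H : forall l r, (forall x, List.In x l -> P x) -> (forall x, List.In x r -> P x) -> P (Game l r))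
  (g : game) {struct g} : P g :=
  match g with
  | Game l r => H l r
      ((fix F (s : seq game) : forall x, List.In x s -> P x :=
          match s return forall x, List.In x s -> P x with
          | [::] => fun x (hx : List.In x [::]) => False_ind _ hx
          | a :: s' => fun x (hx : List.In x (a :: s')) =>
              match hx with
              | or_introl e => eq_ind a P (game_ind' H a) x e
              | or_intror h => F s' x h end
          end) l)
      ((fix F (s : seq game) : forall x, List.In x s -> P x :=
          match s return forall x, List.In x s -> P x with
          | [::] => fun x (hx : List.In x [::]) => False_ind _ hx
          | a :: s' => fun x (hx : List.In x (a :: s')) =>
              match hx with
              | or_introl e => eq_ind a P (game_ind' H a) x e
              | or_intror h => F s' x h end
          end) r)
  end.

Lemma hasIn T (f : T -> bool) s : has f s <-> exists x, List.In x s /\ f x.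
Proof.
elim: s => [|a s IH] /=; first by split => // -[x []].
split.
- case/orP => [h|/IH [x [hx fx]]]; first by exists a; auto.
  by exists x; auto.
- move=> [x [[<-|hx] fx]]; first by rewrite fx.
  by apply/orP; right; apply/IH; exists x.
Qed.

Lemma allIn T (f : T -> bool) s : all f s <-> forall x, List.In x s -> f x.
Proof.
elim: s => [|a s IH] /=; first by split.
split.
- case/andP => fa /IH h x [<-|hx] //; exact: h.
- move=> h; apply/andP; split; first by apply: h; left.
  by apply/IH => x hx; apply: h; right.
Qed.

Lemma In_iota m n x : List.In x (iota m n) <-> m <= x < m + n.
Proof.
elim: n m => [|n IH] m /=; first by split => //; lia.
split.
- case=> [<-|/IH]; lia.
- move=> h; case: (eqVneq m x) => [->|ne]; first by left.
  right; apply/IH; lia.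
Qed.

Lemma map_In_iff T U (f : T -> U) s y :
  List.In y (map f s) <-> exists x, List.In x s /\ y = f x.
Proof.
elim: s => [|a s IH] /=; first by split => // -[x []].
split.
- case=> [<-|/IH [x [hx ->]]]; first by exists a; auto.
  by exists x; auto.
- move=> [x [[<-|hx] e]]; first by left; rewrite e.
  by right; apply/IH; exists x.
Qed.

Lemma In_cat T (x : T) s1 s2 : List.In x (s1 ++ s2) <-> List.In x s1 \/ List.In x s2.
Proof. exact: List.in_app_iff. Qed.

Lemma lopts_add A X :
  lopts (gadd A X) = map (fun a => gadd a X) (lopts A) ++ map (gadd A) (lopts X).
Proof. by case: A => al ar; case: X. Qed.
Lemma ropts_add A X :
  ropts (gadd A X) = map (fun a => gadd a X) (ropts A) ++ map (gadd A) (ropts X).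
Proof. by case: A => al ar; case: X. Qed.

Lemma gadd0 G : gadd zero G = G.
Proof.
elim/game_ind': G => l r IHl IHr.
rewrite /zero /=. 
have E : forall s, (forall x, List.In x s -> gadd zero x = x) -> map (gadd zero) s = s.
  elim=> [|a s IH] //= h; rewrite h; last by left.
  by rewrite IH // => x hx; apply: h; right.
rewrite -[in RHS](E l IHl) -[in RHS](E r IHr).
done.
Qed.

Lemma gaddG0 G : gadd G zero = G.
Proof.
elim/game_ind': G => l r IHl IHr /=.
have E : forall s, (forall x, List.In x s -> gadd x zero = x) -> map (fun x => gadd x zero) s = s.
  elim=> [|a s IH] //= h; rewrite h; last by left.
  by rewrite IH // => x hx; apply: h; right.
by rewrite !cats0 (E l IHl) (E r IHr).
Qed.

Definition lmv TB G ns := has (fun GL => has (fun s' => lwins TB GL s') ns) (lopts G).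
Definition rmv TB G ns := all (fun GR => all (fun s' => lwins TB GR s') ns) (ropts G).
Definition res TB G s l r :=
  let p := bp s in
  if bhat s then
    if r < l then lmv TB G [:: BState (p - l) true; BState (p - l) false]
    else if l == r then lmv TB G [:: BState (p - l) false]
    else rmv TB G [:: BState (p + r) true]
  else
    if l < r then rmv TB G [:: BState (p + r) false; BState (p + r) true]
    else if l == r then rmv TB G [:: BState (p + r) true]
    else lmv TB G [:: BState (p - l) false].

Lemma lwinsE TB G s : lwins TB G s =
  has (fun l => all (fun r => res TB G s l r) (iota 0 (TB - bp s).+1)) (iota 0 (bp s).+1).
Proof. by case: G. Qed.

Lemma lwinsP TB G s : lwins TB G s <->
  exists l, l <= bp s /\ forall r, r <= TB - bp s -> res TB G s l r.
Proof.
rewrite lwinsE hasIn; split.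
- move=> [l [/In_iota hl /allIn h]]; exists l; split; first lia.
  move=> r hr; apply: h; apply/In_iota; lia.
- move=> [l [hl h]]; exists l; split; first by apply/In_iota; lia.
  apply/allIn => r /In_iota hr; apply: h; lia.
Qed.

Lemma lmvP TB G ns : lmv TB G ns <->
  exists GL s', List.In GL (lopts G) /\ List.In s' ns /\ lwins TB GL s'.
Proof.
rewrite /lmv hasIn; split.
- by move=> [GL [h /hasIn [s' [h1 h2]]]]; exists GL, s'.
- by move=> [GL [s' [h1 [h2 h3]]]]; exists GL; split => //; apply/hasIn; exists s'.
Qed.

Lemma rmvP TB G ns : rmv TB G ns <->
  forall GR s', List.In GR (ropts G) -> List.In s' ns -> lwins TB GR s'.
Proof.
rewrite /rmv allIn; split.
- by move=> h GR s' h1 h2; move: (h GR h1) => /allIn; apply.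
- by move=> h GR h1; apply/allIn => s' h2; apply: h.
Qed.


Lemma lmv_trans TB G ns ns' : lmv TB G ns ->
  (forall GL s', List.In GL (lopts G) -> List.In s' ns -> lwins TB GL s' ->
     exists s'', List.In s'' ns' /\ lwins TB GL s'') -> lmv TB G ns'.
Proof.
move=> /lmvP [GL [s' [h1 [h2 h3]]]] h.
have [s'' [h4 h5]] := h GL s' h1 h2 h3.
by apply/lmvP; exists GL, s''.
Qed.

Lemma rmv_trans TB G ns ns' : rmv TB G ns ->
  (forall GR s'', List.In GR (ropts G) -> List.In s'' ns' ->
     exists s', List.In s' ns /\ (lwins TB GR s' -> lwins TB GR s'')) -> rmv TB G ns'.
Proof.
move=> /rmvP H h; apply/rmvP => GR s'' h1 h2.
have [s' [h3 h4]] := h GR s'' h1 h2.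
by apply: h4; apply: H.
Qed.

Ltac solve_pick tac := first
  [ solve [eexists; split; [left; reflexivity | tac]]
  | solve [eexists; split; [right; left; reflexivity | tac]] ].

Lemma mono TB G p h : p < TB -> lwins TB G (BState p h) -> lwins TB G (BState p.+1 h).
Proof.
elim/game_ind': G p h => l0 r0 IHl IHr p h hp /lwinsP [l [hl H]].
apply/lwinsP; exists l; split => /=; first by simpl in hl; lia.
move=> r hr; have H0 := H r ltac:(simpl in *; lia); clear H; move: H0.
simpl in hl, hr.
have e1 : p.+1 - l = (p - l).+1 by lia.
rewrite /res /= e1 addSn.
case: h => /=; case: ifP => _; try case: ifP => _.
all: first [ move=> HH; apply: (lmv_trans HH) => GL s' hG hs' hw;
             case: hs' => [?|hs']; [subst|case: hs' => [?|[]]; subst];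
             solve_pick ltac:(apply: IHl; [exact hG | simpl; lia | exact hw])
           | move=> HH; apply: (rmv_trans HH) => GR s'' hG hs';
             case: hs' => [?|hs']; [subst|case: hs' => [?|[]]; subst];
             solve_pick ltac:(let hw := fresh in move=> hw; apply: IHr; [exact hG | simpl; lia | exact hw]) ].
Qed.

Lemma mono_le TB G p q h : p <= q -> q <= TB -> lwins TB G (BState p h) -> lwins TB G (BState q h).
Proof.
move=> pq qT; elim: q pq qT => [|q IH] pq qT.
- by have -> : p = 0 by lia.
- case: (eqVneq p q.+1) => [->//|ne] w.
  apply: mono; first lia.
  apply: IH => //; lia.
Qed.


Definition le_st (s t : bstate) := bp s < bp t \/ (bp s = bp t /\ (bhat s -> bhat t)).
Definition Pc TB A X := forall s t, le_st s t -> bp t <= TB -> lwins TB X s -> lwins TB (gadd A X) t.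
Definition Eqc TB A X := forall s, bp s <= TB -> lwins TB X s -> lwins TB (gadd A X) s.
Definition pass TB A X := exists a, List.In a (lopts A) /\
  forall p, p <= TB -> lwins TB X (BState p false) -> lwins TB (gadd a X) (BState p false).

Lemma Pc_Eqc TB A X : Pc TB A X -> Eqc TB A X.
Proof. move=> h s hs w; apply: (h s) => //; right; split => //. Qed.

Lemma In_lopts_addR A X x : List.In x (lopts X) -> List.In (gadd A x) (lopts (gadd A X)).
Proof. by move=> h; rewrite lopts_add; apply/In_cat; right; apply/map_In_iff; exists x. Qed.
Lemma In_lopts_addL A X a : List.In a (lopts A) -> List.In (gadd a X) (lopts (gadd A X)).
Proof. by move=> h; rewrite lopts_add; apply/In_cat; left; apply/map_In_iff; exists a. Qed.
Lemma In_ropts_addR A X x : List.In x (ropts X) -> List.In (gadd A x) (ropts (gadd A X)).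
Proof. by move=> h; rewrite ropts_add; apply/In_cat; right; apply/map_In_iff; exists x. Qed.
Lemma In_ropts_addL A X a : List.In a (ropts A) -> List.In (gadd a X) (ropts (gadd A X)).
Proof. by move=> h; rewrite ropts_add; apply/In_cat; left; apply/map_In_iff; exists a. Qed.

Lemma In_ropts_add A X g : List.In g (ropts (gadd A X)) ->
  (exists a, List.In a (ropts A) /\ g = gadd a X) \/ (exists x, List.In x (ropts X) /\ g = gadd A x).
Proof. by rewrite ropts_add => /In_cat [/map_In_iff|/map_In_iff]; [left|right]. Qed.
Lemma In_lopts_add A X g : List.In g (lopts (gadd A X)) ->
  (exists a, List.In a (lopts A) /\ g = gadd a X) \/ (exists x, List.In x (lopts X) /\ g = gadd A x).
Proof. by rewrite lopts_add => /In_cat [/map_In_iff|/map_In_iff]; [left|right]. Qed.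

Lemma lmv_addX TB A X ns ns' : lmv TB X ns ->
  (forall x s', List.In x (lopts X) -> List.In s' ns -> lwins TB x s' ->
     exists s'', List.In s'' ns' /\ lwins TB (gadd A x) s'') -> lmv TB (gadd A X) ns'.
Proof.
move=> /lmvP [x [s' [h1 [h2 h3]]]] h.
have [s'' [h4 h5]] := h x s' h1 h2 h3.
by apply/lmvP; exists (gadd A x), s''; split => //; apply: In_lopts_addR.
Qed.

Lemma lmv_addA TB A X ns' a s'' : List.In a (lopts A) -> List.In s'' ns' ->
  lwins TB (gadd a X) s'' -> lmv TB (gadd A X) ns'.
Proof. by move=> h1 h2 h3; apply/lmvP; exists (gadd a X), s''; split => //; apply: In_lopts_addL. Qed.

Lemma rmv_add TB A X ns ns' : rmv TB X ns ->
  (forall x s'', List.In x (ropts X) -> List.In s'' ns' ->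
     exists s', List.In s' ns /\ (lwins TB x s' -> lwins TB (gadd A x) s'')) ->
  (forall a s'', List.In a (ropts A) -> List.In s'' ns' -> lwins TB (gadd a X) s'') ->
  rmv TB (gadd A X) ns'.
Proof.
move=> /rmvP H h1 h2; apply/rmvP => g s'' hg hs.
case: (In_ropts_add hg) => [[a [ha ->]]|[x [hx ->]]]; first exact: h2.
have [s' [hs' w]] := h1 x s'' hx hs; apply: w; exact: H.
Qed.

Lemma le_st_lt p q h g : p < q -> le_st (BState p h) (BState q g).
Proof. by left. Qed.
Lemma le_st_F p q g : p <= q -> le_st (BState p false) (BState q g).
Proof. move=> h; case: (ltngtP p q) => [lt|gt|->]; [by left| lia |by right]. Qed.
Ltac lest := first [ apply: le_st_lt; simpl in *; lia | apply: le_st_F; simpl in *; lia ].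

Ltac pick_same tac := first
  [ solve [eexists; split; [left; reflexivity | tac]]
  | solve [eexists; split; [right; left; reflexivity | tac]] ].

Ltac inl2 h := simpl in h; repeat match type of h with
  | _ \/ _ => case: h => [?|h]; [subst|]
  | False => case: h end.

Lemma step0 TB A X :
  (forall a, List.In a (ropts A) -> Pc TB a X) ->
  (forall x, List.In x (lopts X) -> Eqc TB A x) ->
  (forall x, List.In x (ropts X) -> Eqc TB A x) -> Eqc TB A X.
Proof.
move=> HA HL HR [p h] /= hp w.
have := w; move=> /lwinsP [l [hl H]].
apply/lwinsP; exists l; split => // r hr.
have H0 := H r hr; clear H; move: H0 w.
simpl in hl, hr.
rewrite /res /=; case: h => /=; case: ifP => h1; try case: ifP => h2; move=> HH w;
  try move/negbT: h1 => h1; try move/negbT: h2 => h2.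
all: first
  [ apply: (lmv_addX HH) => x s' hx hs' hw; inl2 hs';
    pick_same ltac:(apply: HL; [exact hx | simpl; lia | exact hw])
  | apply: (rmv_add HH);
    [ move=> x s'' hx hs''; inl2 hs'';
      pick_same ltac:(let hw := fresh in move=> hw; apply: HR; [exact hx | simpl; lia | exact hw])
    | move=> a s'' ha hs''; inl2 hs''; (apply: (HA a ha _ _ _ _ w); [lest | simpl; lia]) ] ].
Qed.

Ltac hres H := rewrite /res /= in H; move: H;
  repeat (case: ifP => ?; try (exfalso; lia)); move=> H.
Ltac gres := rewrite /res /=; repeat (case: ifP => ?; try (exfalso; lia)).

Lemma step1 TB A X :
  (forall a, List.In a (ropts A) -> Pc TB a X) ->
  (forall x, List.In x (lopts X) -> Eqc TB A x) ->
  (forall x, List.In x (ropts X) -> Eqc TB A x) ->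
  pass TB A X ->
  forall p, p <= TB -> lwins TB X (BState p false) -> lwins TB (gadd A X) (BState p true).
Proof.
move=> HA HL HR [a0 [ha0 hpass]] p hp w.
have := w; move=> /lwinsP [l [hl H]]; simpl in hl.
apply/lwinsP; exists l; split => // r hr; simpl in hr.
case: (ltngtP r l) => c.
- have HH := H r hr; hres HH; gres.
  apply: (lmv_addX HH) => x s' hx hs' hw; inl2 hs'.
  exists (BState (p - l) false); split; first by right; left.
  by apply: (HL x hx); [simpl; lia | exact hw].
- have HH := H r hr; hres HH; gres.
  apply: (rmv_add HH).
  + move=> x s'' hx hs''; inl2 hs''.
    exists (BState (p + r) true); split; first by right; left.
    by move=> hw; apply: (HR x hx); [simpl; lia | exact hw].
  + move=> a s'' ha hs''; inl2 hs''; (apply: (HA a ha _ _ _ _ w); [lest | simpl; lia]).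
- subst r. case: (posnP l) => l0.
  + subst l; gres; apply: (lmv_addA (a := a0)) => //; first by left.
    rewrite subn0; exact: hpass.
  + have HH := H 0 ltac:(simpl; lia); hres HH; gres.
    apply: (lmv_addX HH) => x s' hx hs' hw; inl2 hs'.
    exists (BState (p - l) false); split; first by left.
    by apply: (HL x hx); [simpl; lia | exact hw].
Qed.

Lemma step2 TB A X :
  (forall a, List.In a (ropts A) -> Pc TB a X) ->
  (forall x, List.In x (lopts X) -> Pc TB A x) ->
  (forall x, List.In x (ropts X) -> Pc TB A x) ->
  forall p, p < TB -> lwins TB X (BState p true) -> lwins TB (gadd A X) (BState p.+1 false).
Proof.
move=> HA HL HR p hp w.
have := w; move=> /lwinsP [l [hl H]]; simpl in hl.
case: (leqP l (TB - p)) => hlT.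
- apply/lwinsP; exists l.+1; split => /=; first lia.
  move=> r hr; simpl in hr.
  case: (leqP r l) => c.
  + have HH := H l hlT; hres HH; gres.
    apply: (lmv_addX HH) => x s' hx hs' hw; inl2 hs'.
    exists (BState (p.+1 - l.+1) false); split; first by left.
    apply: (HL x hx _ _ _ _ hw); [lest | simpl; lia].
  + have HH := H r ltac:(simpl; lia); hres HH; gres;
    (apply: (rmv_add HH);
      [ move=> x s'' hx hs''; inl2 hs'';
        (exists (BState (p + r) true); split; [by left | ]);
        (move=> hw; apply: (HR x hx _ _ _ _ hw); [lest | simpl; lia])
      | move=> a s'' ha hs''; inl2 hs''; (apply: (HA a ha _ _ _ _ w); [lest | simpl; lia]) ]).
- apply/lwinsP; exists l; split => /=; first lia.
  move=> r hr; simpl in hr.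
  have HH := H 0 ltac:(simpl; lia); hres HH; gres.
  apply: (lmv_addX HH) => x s' hx hs' hw; inl2 hs';
  (exists (BState (p.+1 - l) false); split; [by left | ]);
  (apply: (HL x hx _ _ _ _ hw); [lest | simpl; lia]).
Qed.

Lemma stepP TB A X :
  (forall a, List.In a (ropts A) -> Pc TB a X) ->
  (forall x, List.In x (lopts X) -> Pc TB A x) ->
  (forall x, List.In x (ropts X) -> Pc TB A x) ->
  pass TB A X -> Pc TB A X.
Proof.
move=> HA HL HR hps.
have E : Eqc TB A X.
  apply: step0 => // x hx; apply: Pc_Eqc; [exact: HL | exact: HR].
have HE : forall x, List.In x (lopts X) -> Eqc TB A x.
  by move=> x hx; apply: Pc_Eqc; exact: HL.
have HE' : forall x, List.In x (ropts X) -> Eqc TB A x.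
  by move=> x hx; apply: Pc_Eqc; exact: HR.
move=> [p h] [q g] [/= lt | [/= eq imp]] hq w; simpl in hq.
- case: h w => w; case: g.
  + apply: E => //; apply: (mono_le (p := p)) => //; lia.
  + apply: (mono_le (p := p.+1)); [lia | lia | apply: step2 => //; lia].
  + apply: step1 => //; apply: (mono_le (p := p)) => //; lia.
  + apply: E => //; apply: (mono_le (p := p)) => //; lia.
- subst q; case: h imp w => [imp|_] w.
  + rewrite (imp erefl); exact: E.
  + case: g; last exact: E.
    exact: step1.
Qed.


Lemma lopts_dyad j : lopts (dyad j) = [:: zero].
Proof. by case: j. Qed.
Lemma ropts_dyad0 : ropts (dyad 0) = [::].
Proof. by []. Qed.
Lemma ropts_dyadS j : ropts (dyad j.+1) = [:: dyad j].
Proof. by []. Qed.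
Lemma ropts_Edyad j : ropts (conj (dyad j)) = [:: zero].
Proof. by case: j. Qed.
Lemma lopts_Edyad0 : lopts (conj (dyad 0)) = [::].
Proof. by []. Qed.
Lemma lopts_EdyadS j : lopts (conj (dyad j.+1)) = [:: conj (dyad j)].
Proof. by []. Qed.

Lemma le_st_refl s : le_st s s.
Proof. by right. Qed.

Definition QL TB X := forall j, Pc TB (dyad j) X /\
  (forall i, i < j -> Pc TB (gadd (dyad i) (conj (dyad j))) X) /\
  Eqc TB (gadd (dyad j) (conj (dyad j))) X.

Lemma QL_all TB X : QL TB X.
Proof.
elim/game_ind': X => xl xr IHl IHr j.
elim/ltn_ind: j => j IHj.
have PD : Pc TB (dyad j) (Game xl xr).
  apply: stepP.
  - move=> a; case: j IHj => [|j'] IHj //=; case=> // <-.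
    by case: (IHj j' (ltnSn _)).
  - by move=> x hx; case: (IHl x hx j).
  - by move=> x hx; case: (IHr x hx j).
  - exists zero; split; first by rewrite lopts_dyad; left.
    by move=> p _; rewrite gadd0.
have PDE : forall i, i < j -> Pc TB (gadd (dyad i) (conj (dyad j))) (Game xl xr).
  elim=> [|i IHi] hij; apply: stepP.
  - move=> a /In_ropts_add [[a' [ha' ->]]|[x' [hx' ->]]] //.
    move: hx'; rewrite ropts_Edyad => -[<-|[]]; rewrite gaddG0.
    by case: (IHj 0 hij).
  - by move=> x hx; case: (IHl x hx j) => _ [h _]; apply: h.
  - by move=> x hx; case: (IHr x hx j) => _ [h _]; apply: h.
  - case: j IHj hij {PD} => [//|j'] IHj hij.
    exists (gadd (dyad 0) (conj (dyad j'))); split.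
      by apply: In_lopts_addR; rewrite lopts_EdyadS; left.
    move=> p hp w; case: (IHj j' (ltnSn _)) => _ [h1 h2].
    case: (posnP j') => [e|pos].
    + subst j'; exact: h2.
    + by apply: (h1 0 pos _ _ (le_st_refl _)).
  - move=> a /In_ropts_add [[a' [ha' ->]]|[x' [hx' ->]]].
    + move: ha'; rewrite ropts_dyadS => -[<-|[]].
      apply: IHi; lia.
    + move: hx'; rewrite ropts_Edyad => -[<-|[]]; rewrite gaddG0.
      by case: (IHj i.+1 hij).
  - by move=> x hx; case: (IHl x hx j) => _ [h _]; apply: h.
  - by move=> x hx; case: (IHr x hx j) => _ [h _]; apply: h.
  - case: j IHj hij {PD IHi} => [//|j'] IHj hij.
    exists (gadd (dyad i.+1) (conj (dyad j'))); split.
      by apply: In_lopts_addR; rewrite lopts_EdyadS; left.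
    move=> p hp w; case: (IHj j' (ltnSn _)) => _ [h1 h2].
    case: (eqVneq i.+1 j') => [e|ne].
    + subst j'; exact: h2.
    + by apply: (h1 i.+1 ltac:(lia) _ _ (le_st_refl _)).
split => //; split => //.
apply: step0.
- move=> a /In_ropts_add [[a' [ha' ->]]|[x' [hx' ->]]].
  + case: j IHj PD PDE ha' => [//|j'] IHj PD PDE.
    rewrite ropts_dyadS => -[<-|[]].
    exact: PDE.
  + move: hx'; rewrite ropts_Edyad => -[<-|[]]; rewrite gaddG0.
    exact: PD.
- by move=> x hx; case: (IHl x hx j) => _ [_ h].
- by move=> x hx; case: (IHr x hx j) => _ [_ h].
Qed.


Definition Pc' TB A X := forall s t, le_st s t -> bp t <= TB -> ~~ lwins TB X t -> ~~ lwins TB (gadd A X) s.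
Definition Eqc' TB A X := forall s, bp s <= TB -> ~~ lwins TB X s -> ~~ lwins TB (gadd A X) s.
Definition pass' TB A X := exists a, List.In a (ropts A) /\
  forall p, p <= TB -> ~~ lwins TB X (BState p true) -> ~~ lwins TB (gadd a X) (BState p true).

Lemma Pc'_Eqc' TB A X : Pc' TB A X -> Eqc' TB A X.
Proof. move=> h s hs w; apply: (h s s) => //; right; split => //. Qed.

Lemma nlwinsP TB G s : ~~ lwins TB G s <->
  forall l, l <= bp s -> exists r, r <= TB - bp s /\ ~~ res TB G s l r.
Proof.
rewrite lwinsE -all_predC allIn; split.
- move=> h l hl.
  have hh : ~~ all (fun r => res TB G s l r) (iota 0 (TB - bp s).+1) := h l ltac:(apply/In_iota; lia).
  move: hh; rewrite -has_predC => /hasIn [r [/In_iota hr hres]]; exists r; split => //; lia.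
- move=> h l /In_iota hl.
  change (~~ all (fun r => res TB G s l r) (iota 0 (TB - bp s).+1)); rewrite -has_predC.
  have [r [hr hres]] := h l ltac:(lia).
  apply/hasIn; exists r; split => //; apply/In_iota; lia.
Qed.

Lemma nlmvP TB G ns : ~~ lmv TB G ns <->
  forall GL s', List.In GL (lopts G) -> List.In s' ns -> ~~ lwins TB GL s'.
Proof.
split.
- move=> h GL s' h1 h2; apply/negP => w; move/negP: h; apply; apply/lmvP; by exists GL, s'.
- move=> h; apply/negP => /lmvP [GL [s' [h1 [h2 h3]]]]; by move: (h GL s' h1 h2); rewrite h3.
Qed.

Lemma nrmvP TB G ns : ~~ rmv TB G ns <->
  exists GR s', List.In GR (ropts G) /\ List.In s' ns /\ ~~ lwins TB GR s'.
Proof.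
rewrite /rmv -has_predC hasIn; split.
- move=> [GR [h1 /= h2]]; move: h2; rewrite -has_predC => /hasIn [s' [h3 h4]].
  by exists GR, s'.
- move=> [GR [s' [h1 [h2 h3]]]]; exists GR; split => //=.
  by rewrite -has_predC; apply/hasIn; exists s'.
Qed.

Lemma nlmv_add TB A X ns ns' : ~~ lmv TB X ns ->
  (forall x s'', List.In x (lopts X) -> List.In s'' ns' ->
     exists s', List.In s' ns /\ (~~ lwins TB x s' -> ~~ lwins TB (gadd A x) s'')) ->
  (forall a s'', List.In a (lopts A) -> List.In s'' ns' -> ~~ lwins TB (gadd a X) s'') ->
  ~~ lmv TB (gadd A X) ns'.
Proof.
move=> /nlmvP H h1 h2; apply/nlmvP => g s'' hg hs.
case: (In_lopts_add hg) => [[a [ha ->]]|[x [hx ->]]]; first exact: h2.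
have [s' [hs' w]] := h1 x s'' hx hs; apply: w; exact: H.
Qed.

Lemma nrmv_addX TB A X ns ns' : ~~ rmv TB X ns ->
  (forall x s', List.In x (ropts X) -> List.In s' ns -> ~~ lwins TB x s' ->
     exists s'', List.In s'' ns' /\ ~~ lwins TB (gadd A x) s'') -> ~~ rmv TB (gadd A X) ns'.
Proof.
move=> /nrmvP [x [s' [h1 [h2 h3]]]] h.
have [s'' [h4 h5]] := h x s' h1 h2 h3.
by apply/nrmvP; exists (gadd A x), s''; split => //; apply: In_ropts_addR.
Qed.

Lemma nrmv_addA TB A X ns' a s'' : List.In a (ropts A) -> List.In s'' ns' ->
  ~~ lwins TB (gadd a X) s'' -> ~~ rmv TB (gadd A X) ns'.
Proof. by move=> h1 h2 h3; apply/nrmvP; exists (gadd a X), s''; split => //; apply: In_ropts_addL. Qed.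

Lemma nmono_le TB G p q h : p <= q -> q <= TB -> ~~ lwins TB G (BState q h) -> ~~ lwins TB G (BState p h).
Proof. move=> pq qT /negP nw; apply/negP => w; apply: nw; exact: mono_le w. Qed.

Ltac nhres H := rewrite /res /= in H; move: H;
  repeat (case: ifP => ?; try (exfalso; lia)); move=> H.
Ltac ngres := rewrite /res /=; repeat (case: ifP => ?; try (exfalso; lia)).

Lemma step0' TB A X :
  (forall a, List.In a (lopts A) -> Pc' TB a X) ->
  (forall x, List.In x (lopts X) -> Eqc' TB A x) ->
  (forall x, List.In x (ropts X) -> Eqc' TB A x) -> Eqc' TB A X.
Proof.
move=> HA HL HR [p h] /= hp w.
have := w; move=> /nlwinsP H.
apply/nlwinsP => l hl; simpl in hl.
have [r [hr HH]] := H l hl; simpl in hr.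
exists r; split => //; clear H; move: HH w.
rewrite /res /=; case: h => /=; case: ifP => h1; try case: ifP => h2; move=> HH w;
  try move/negbT: h1 => h1; try move/negbT: h2 => h2.
all: first
  [ apply: (nlmv_add HH);
    [ move=> x s'' hx hs''; inl2 hs'';
      pick_same ltac:(let hw := fresh in move=> hw; apply: HL; [exact hx | simpl; lia | exact hw])
    | move=> a s'' ha hs''; inl2 hs''; (apply: (HA a ha _ _ _ _ w); [lest | simpl; lia]) ]
  | apply: (nrmv_addX HH) => x s' hx hs' hw; inl2 hs';
    pick_same ltac:(apply: HR; [exact hx | simpl; lia | exact hw]) ].
Qed.

Lemma step1' TB A X :
  (forall a, List.In a (lopts A) -> Pc' TB a X) ->
  (forall x, List.In x (lopts X) -> Eqc' TB A x) ->
  (forall x, List.In x (ropts X) -> Eqc' TB A x) ->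
  pass' TB A X ->
  forall p, p <= TB -> ~~ lwins TB X (BState p true) -> ~~ lwins TB (gadd A X) (BState p false).
Proof.
move=> HA HL HR [a0 [ha0 hpass]] p hp w.
have := w; move=> /nlwinsP H.
apply/nlwinsP => l hl; simpl in hl.
have [r0 [hr0 HH]] := H l hl; simpl in hr0; clear H.
case: (ltnP l r0) => c.
- exists r0; split => //; nhres HH; ngres.
  apply: (nrmv_addX HH) => x s' hx hs' hw; inl2 hs'.
  exists (BState (p + r0) true); split; first by right; left.
  by apply: (HR x hx); [simpl; lia | exact hw].
- case: (posnP l) => l0.
  + subst l; have e : r0 = 0 by lia.
    subst r0; exists 0; split => //=; ngres.
    apply: (nrmv_addA (a := a0)) => //; first by left.
    rewrite addn0; exact: hpass.
  + exists 0; split; first lia.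
    ngres.
    have HL2 : forall x, List.In x (lopts X) -> ~~ lwins TB x (BState (p - l) false) ->
                 ~~ lwins TB (gadd A x) (BState (p - l) false).
      by move=> x hx hw; apply: (HL x hx); [simpl; lia | exact hw].
    nhres HH.
    all: apply: (nlmv_add HH);
      [ move=> x s'' hx hs''; inl2 hs'';
        (exists (BState (p - l) false); split; [by repeat (try (left; reflexivity); right) | exact: HL2 ])
      | move=> a s'' ha hs''; inl2 hs''; (apply: (HA a ha _ _ _ _ w); [lest | simpl; lia]) ].
Qed.

Lemma step2' TB A X :
  (forall a, List.In a (lopts A) -> Pc' TB a X) ->
  (forall x, List.In x (lopts X) -> Pc' TB A x) ->
  (forall x, List.In x (ropts X) -> Pc' TB A x) ->
  forall p, p < TB -> ~~ lwins TB X (BState p.+1 false) -> ~~ lwins TB (gadd A X) (BState p true).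
Proof.
move=> HA HL HR p hp w.
have := w; move=> /nlwinsP H.
apply/nlwinsP => l hl; simpl in hl.
case: (leqP l (TB - p)) => hlT.
- have [r0 [hr0 HH]] := H l.+1 ltac:(simpl; lia); simpl in hr0; clear H.
  case: (ltnP l r0) => c.
  + exists r0; split; first (simpl; lia).
    nhres HH; ngres;
    (apply: (nrmv_addX HH) => x s' hx hs' hw; inl2 hs';
     (exists (BState (p + r0) true); split; [by left | ]);
     (apply: (HR x hx _ _ _ _ hw); [lest | simpl; lia])).
  + exists l; split; first (simpl; lia).
    nhres HH; ngres.
    apply: (nlmv_add HH).
    * move=> x s'' hx hs''; inl2 hs''.
      exists (BState (p.+1 - l.+1) false); split; first by left.
      move=> hw; apply: (HL x hx _ _ _ _ hw); [lest | simpl; lia].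
    * move=> a s'' ha hs''; inl2 hs''; (apply: (HA a ha _ _ _ _ w); [lest | simpl; lia]).
- have [r1 [hr1 HH]] := H l ltac:(simpl; lia); simpl in hr1; clear H.
  exists 0; split; first (simpl; lia).
  nhres HH; ngres.
  apply: (nlmv_add HH).
  + move=> x s'' hx hs''; inl2 hs'';
    (exists (BState (p.+1 - l) false); split; [by left | ]);
    (move=> hw; apply: (HL x hx _ _ _ _ hw); [lest | simpl; lia]).
  + move=> a s'' ha hs''; inl2 hs''; (apply: (HA a ha _ _ _ _ w); [lest | simpl; lia]).
Qed.

Lemma stepP' TB A X :
  (forall a, List.In a (lopts A) -> Pc' TB a X) ->
  (forall x, List.In x (lopts X) -> Pc' TB A x) ->
  (forall x, List.In x (ropts X) -> Pc' TB A x) ->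
  pass' TB A X -> Pc' TB A X.
Proof.
move=> HA HL HR hps.
have HE : forall x, List.In x (lopts X) -> Eqc' TB A x.
  by move=> x hx; apply: Pc'_Eqc'; exact: HL.
have HE' : forall x, List.In x (ropts X) -> Eqc' TB A x.
  by move=> x hx; apply: Pc'_Eqc'; exact: HR.
have E : Eqc' TB A X by apply: step0'.
move=> [p h] [q g] [/= lt | [/= eq imp]] hq w; simpl in hq.
- case: h; case: g w => w.
  + apply: E => //=; first lia. apply: (nmono_le (q := q)) => //; lia.
  + apply: step2'; [done|done|done|lia|]. apply: (nmono_le (q := q)) => //; lia.
  + apply: step1' => //=; first lia. apply: (nmono_le (q := q)) => //; lia.
  + apply: E => //=; first lia. apply: (nmono_le (q := q)) => //; lia.
- subst q; case: h imp => [imp|_].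
  + rewrite (imp erefl) in w; exact: E.
  + case: g w => w; last exact: E.
    exact: step1'.
Qed.


Definition QR TB X := forall j, Pc' TB (conj (dyad j)) X /\
  (forall i, i < j -> Pc' TB (gadd (dyad j) (conj (dyad i))) X) /\
  Eqc' TB (gadd (dyad j) (conj (dyad j))) X.

Lemma QR_all TB X : QR TB X.
Proof.
elim/game_ind': X => xl xr IHl IHr j.
elim/ltn_ind: j => j IHj.
have PE : Pc' TB (conj (dyad j)) (Game xl xr).
  apply: stepP'.
  - move=> a; case: j IHj => [|j'] IHj //=; case=> // <-.
    by case: (IHj j' (ltnSn _)).
  - by move=> x hx; case: (IHl x hx j).
  - by move=> x hx; case: (IHr x hx j).
  - exists zero; split; first by rewrite ropts_Edyad; left.
    by move=> p _; rewrite gadd0.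
have PDE : forall i, i < j -> Pc' TB (gadd (dyad j) (conj (dyad i))) (Game xl xr).
  elim=> [|i IHi] hij; apply: stepP'.
  - move=> a /In_lopts_add [[a' [ha' ->]]|[x' [hx' ->]]] //.
    move: ha'; rewrite lopts_dyad => -[<-|[]]; rewrite gadd0.
    by case: (IHj 0 hij).
  - by move=> x hx; case: (IHl x hx j) => _ [h _]; apply: h.
  - by move=> x hx; case: (IHr x hx j) => _ [h _]; apply: h.
  - case: j IHj hij {PE} => [//|j'] IHj hij.
    exists (gadd (dyad j') (conj (dyad 0))); split.
      by apply: In_ropts_addL; rewrite ropts_dyadS; left.
    move=> p hp w; case: (IHj j' (ltnSn _)) => _ [h1 h2].
    case: (posnP j') => [e|pos].
    + subst j'; exact: h2.
    + by apply: (h1 0 pos _ _ (le_st_refl _)).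
  - move=> a /In_lopts_add [[a' [ha' ->]]|[x' [hx' ->]]].
    + move: ha'; rewrite lopts_dyad => -[<-|[]]; rewrite gadd0.
      by case: (IHj i.+1 hij).
    + move: hx'; rewrite lopts_EdyadS => -[<-|[]].
      apply: IHi; lia.
  - by move=> x hx; case: (IHl x hx j) => _ [h _]; apply: h.
  - by move=> x hx; case: (IHr x hx j) => _ [h _]; apply: h.
  - case: j IHj hij {PE IHi} => [//|j'] IHj hij.
    exists (gadd (dyad j') (conj (dyad i.+1))); split.
      by apply: In_ropts_addL; rewrite ropts_dyadS; left.
    move=> p hp w; case: (IHj j' (ltnSn _)) => _ [h1 h2].
    case: (eqVneq i.+1 j') => [e|ne].
    + subst j'; exact: h2.
    + by apply: (h1 i.+1 ltac:(lia) _ _ (le_st_refl _)).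
split => //; split => //.
apply: step0'.
- move=> a /In_lopts_add [[a' [ha' ->]]|[x' [hx' ->]]].
  + move: ha'; rewrite lopts_dyad => -[<-|[]]; rewrite gadd0.
    exact: PE.
  + case: j IHj PE PDE hx' => [//|j'] IHj PE PDE.
    rewrite lopts_EdyadS => -[<-|[]].
    exact: PDE.
- by move=> x hx; case: (IHl x hx j) => _ [_ h].
- by move=> x hx; case: (IHr x hx j) => _ [_ h].
Qed.

Theorem mainTheorem17 (TB k : nat) (hk : 1 <= k) :
  game_eq TB (gadd (dyad k) (conj (dyad k))) zero.
Proof.
split => X p hat hp; rewrite gadd0 /o.
- case w: (lwins TB X (BState p hat)) => //.
  have [_ [_ E]] := QL_all TB X k.
  by rewrite (E (BState p hat) hp w).
- case w: (lwins TB X (BState p hat)); first by case: ifP.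
  have [_ [_ E]] := QR_all TB X k.
  by rewrite (negbTE (E (BState p hat) hp (negbT w))).
Qed.
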